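(* Consider an incoming approach (queue $i$) of a signalized intersection in the ''one+two lane'' model. A single shared lane of vehicles splits near the intersection into two dedicated lanes, one for straight-going and one for left-turning vehicles. The traffic light senses whether the head position of each dedicated lane is occupied, so it knows the movements of the (up to two) leading vehicles. A traffic phase $\phi$ gives a green interval of $n$ time slots, with at most one vehicle passing per slot. The possible head configurations are as follows. - Conf. I: the straight-lane head is empty and the two leading vehicles both turn left. - Conf. IV: the left-lane head is empty and the two leading vehicles both go straight. - Conf. II and Conf. III: both heads are occupied, one by a straight-going and one by a left-turning vehicle. Let $g=2$ in Conf. I or IV and $g=1$ in Conf. II or III. Assume: - the phase $\phi$ permits the movement of the $g$ guaranteed leading vehicles, so these $g$ vehicles pass; - the remaining vehicles form a sub-queue of $m=n-g$ positions that behaves as a single lane. In this single lane, vehicles pass one per slot in queue order while the head intends the permitted movement; a head vehicle intending the other movement blocks itself and all vehicles behind it. In the sub-queue, $T\le m$ vehicles are communicating, at sub-queue positions $1\le v_1<\dots<v_T\le m$, with known movements. Each non-communicating sub-queue vehicle independently intends the permitted movement with probability $p_1$ and the other movement with probability $p_2=1-p_1$, where $0<p_1<1$. Set $v_0=1$ and $v_{T+1}=m+1$. Let $K^{\phi}_i$ be the number of vehicles of queue $i$ that pass. If all communicating sub-queue vehicles intend the permitted movement (condition $C_3$), then $$E(K^{\phi}_i)=g+\sum_{l=0}^{T}\frac{p_1^{1-l}}{p_2}\Big((p_1+p_2v_l)p_1^{v_l-1}+(1-2p_1-p_2v_{l+1})p_1^{v_{l+1}-2}\Big)+(n-g)\,p_1^{\,n-g-T}.$$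 If the first communicating sub-queue vehicle not intending the permitted movement is the $L$-th one, at position $v_L$ with $1\le L\le T$ (condition $C_4$), then $$E(K^{\phi}_i)=g+\sum_{l=0}^{L-1}\frac{p_1^{1-l}}{p_2}\Big((p_1+p_2v_l)p_1^{v_l-1}+(1-2p_1-p_2v_{l+1})p_1^{v_{l+1}-2}\Big)+(v_L-1)\,p_1^{\,v_L-L}.$$ In particular, for Conf. I/IV the leading constant is $2$ with $T\le n-2$ and final $C_3$ term $(n-2)p_1^{n-2-T}$; for Conf. II/III it is $1$ with $T\le n-1$ and final $C_3$ term $(n-1)p_1^{n-1-T}$.
   Context: Right-turning vehicles are merged with straight-going ones, so only two movements exist. The expectation is over the random intentions of the non-communicating vehicles in the sub-queue, conditional on the known information. Time index $t$ is suppressed. *)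

(* Defs.v *)
From mathcomp Require Import all_boot all_order all_algebra.
Set Implicit Arguments. Unset Strict Implicit. Unset Printing Implicit Defensive.
Import Order.TTheory GRing.Theory Num.Theory.
Local Open Scope ring_scope.

Inductive conf := ConfI | ConfII | ConfIII | ConfIV.

Definition g_of (c : conf) : nat :=
  match c with ConfI | ConfIV => 2 | ConfII | ConfIII => 1 end%N.

(* An intention profile of the sub-queue: w i = true iff the vehicle at
   sub-queue position i.+1 intends the permitted movement. *)

(* Number of sub-queue vehicles that pass: the length of the leading run of
   vehicles intending the permitted movement (single lane, blocking). *)
Definition sub_passed (m : nat) (w : {ffun 'I_m -> bool}) : nat :=
  #|[set i : 'I_m | [forall j : 'I_m, (j <= i)%N ==> w j]]|.

Definition communicating (m T : nat) (v : nat -> nat) (i : 'I_m) : bool :=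
  [exists l : 'I_T.+1, (1 <= l)%N && (v l == i.+1)].

Definition consistent (m T : nat) (v : nat -> nat) (c : nat -> bool)
  (w : {ffun 'I_m -> bool}) : bool :=
  [forall i : 'I_m, forall l : 'I_T.+1,
     ((1 <= l)%N && (v l == i.+1)) ==> (w i == c l)].

Definition weight (R : ringType) (p1 p2 : R) (m T : nat) (v : nat -> nat)
  (w : {ffun 'I_m -> bool}) : R :=
  \prod_(i < m | ~~ communicating T v i) (if w i then p1 else p2).

Definition EK (R : ringType) (p1 p2 : R) (cf : conf) (n T : nat)
  (v : nat -> nat) (c : nat -> bool) : R :=
  let m := (n - g_of cf)%N in
  \sum_(w : {ffun 'I_m -> bool} | consistent T v c w)
     weight p1 p2 T v w * ((g_of cf + sub_passed w)%N)%:R.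

Definition term (R : unitRingType) (p1 p2 : R) (v : nat -> nat) (l : nat) : R :=
  p1 ^ (1 - (l%:Z))%R / p2 *
  ((p1 + p2 * (v l)%:R) * p1 ^ ((v l)%:Z - 1)%R
   + (1 - 2 * p1 - p2 * (v l.+1)%:R) * p1 ^ ((v l.+1)%:Z - 2)%R).

(* Main.v *)
Require Import Defs.
From mathcomp Require Import all_boot all_order all_algebra.
From mathcomp Require Import ring lra zify.
Set Implicit Arguments. Unset Strict Implicit. Unset Printing Implicit Defensive.
Import Order.TTheory GRing.Theory Num.Theory.
Local Open Scope ring_scope.

Definition apos (R : ringType) (p1 : R) (T : nat) (v : nat -> nat) (c : nat -> bool) (p : nat) : R :=
  if [pick l : 'I_T.+1 | (1 <= l)%N && (v l == p)] is Some l then (c l)%:R else p1.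

Lemma prod_boolP (R : comRingType) (I : finType) (P : pred I) (b : I -> bool) :
  \prod_(i | P i) ((b i)%:R : R) = ([forall i, P i ==> b i])%:R.
Proof.
case: (boolP [forall i, P i ==> b i]) => [/forallP H|].
  rewrite big1 // => i Pi; by move: (H i); rewrite Pi /= => ->.
rewrite negb_forall => /existsP [i]; rewrite negb_imply => /andP [Pi bi].
by rewrite (bigD1 i) //= (negbTE bi) mul0r.
Qed.

Lemma prod_boolT (R : comRingType) (I : finType) (b : I -> bool) :
  \prod_i ((b i)%:R : R) = ([forall i, b i])%:R.
Proof.
by rewrite (@prod_boolP _ _ predT).
Qed.

Lemma G_prod (R : comRingType) (p1 p2 : R) (m T : nat) (v : nat -> nat) (c : nat -> bool) (k : nat) :
  (forall l1 l2 : 'I_T.+1, (1 <= l1)%N -> (1 <= l2)%N -> v l1 = v l2 -> l1 = l2) ->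
  p1 + p2 = 1 ->
  \sum_(w : {ffun 'I_m -> bool} | consistent T v c w)
     weight p1 p2 T v w * ([forall j : 'I_m, (j < k)%N ==> w j])%:R
  = \prod_(i < m | (i < k)%N) apos p1 T v c i.+1.
Proof.
move=> Huniq Hp.
pose A (i : 'I_m) (b : bool) : R :=
  if ~~ communicating T v i then (if b then p1 else p2) else 1.
pose B (i : 'I_m) (b : bool) : R :=
  \prod_(l : 'I_T.+1 | (1 <= l)%N && (v l == i.+1)) ((b == c l)%:R : R).
pose C (i : 'I_m) (b : bool) : R := if (i < k)%N then (b%:R : R) else 1.
transitivity (\sum_(w : {ffun 'I_m -> bool}) \prod_(i < m) (A i (w i) * B i (w i) * C i (w i))).
  rewrite big_mkcond /=; apply: eq_bigr => w _.
  rewrite big_split big_split /=.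
  have -> : \prod_i A i (w i) = weight p1 p2 T v w.
    by rewrite /weight [RHS]big_mkcond.
  have -> : \prod_i B i (w i) = (consistent T v c w)%:R.
    rewrite /B /consistent.
    under eq_bigr => i _ do rewrite prod_boolP.
    by rewrite prod_boolT.
  have -> : \prod_i C i (w i) = ([forall j : 'I_m, (j < k)%N ==> w j])%:R.
    by rewrite /C -big_mkcond prod_boolP.
  by case: (consistent T v c w); rewrite ?mulr1 ?mulr0 ?mul0r.
rewrite -(bigA_distr_bigA (fun i b => A i b * B i b * C i b)) [RHS]big_mkcond /=; apply: eq_bigr => i _.
rewrite big_bool /A /B /C /apos.
case: (boolP (communicating T v i)) => Hc /=.
  move: (Hc); rewrite /communicating => /existsP [l0 /andP [H1 H2]].
  have Hcond : forall l : 'I_T.+1, ((1 <= l)%N && (v l == i.+1)) = (l == l0).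
    move=> l; apply/idP/eqP => [/andP [H3 /eqP H4]|->]; last by rewrite H1 H2.
    by apply: Huniq => //; rewrite H4 (eqP H2).
  rewrite !(eq_bigl _ _ Hcond) !big_pred1_eq.
  case: pickP => [l /[!Hcond] /eqP -> | /(_ l0) /[!Hcond] /[!eqxx] //].
  by case: (i < k)%N; case: (c l0); rewrite /= ?mulr1 ?mul1r ?mulr0 ?addr0 ?add0r.
have Hn : forall l : 'I_T.+1, ((1 <= l)%N && (v l == i.+1)) = false.
  move=> l; apply/negP => Hl; move/negP: Hc; apply; apply/existsP; by exists l.
rewrite !(eq_bigl _ _ Hn) !big_pred0 //.
case: pickP => [l /[!Hn] //|_].
by case: (i < k)%N; rewrite /= ?mulr1 ?mul1r ?mulr0 ?addr0 ?add0r.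
Qed.

Lemma sp_sum (m : nat) (w : {ffun 'I_m -> bool}) :
  sub_passed w = (\sum_(k < m) [forall j : 'I_m, (j < k.+1)%N ==> w j])%N.
Proof.
rewrite /sub_passed -sum1_card big_mkcond /=; apply: eq_bigr => i _.
rewrite inE.
by case: [forall _, _].
Qed.

Lemma EK_eq (R : realFieldType) (p1 p2 : R) (cf : conf) (n T : nat)
  (v : nat -> nat) (c : nat -> bool) :
  (forall l1 l2 : 'I_T.+1, (1 <= l1)%N -> (1 <= l2)%N -> v l1 = v l2 -> l1 = l2) ->
  p1 + p2 = 1 ->
  EK p1 p2 cf n T v c = (g_of cf)%:R +
    \sum_(k < n - g_of cf) \prod_(i < n - g_of cf | (i < k.+1)%N) apos p1 T v c i.+1.
Proof.
move=> Hu Hp; rewrite /EK /=.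
under eq_bigr => w _ do rewrite natrD mulrDr.
rewrite big_split /=; congr (_ + _).
  have H0 := G_prod (n - g_of cf) c 0 Hu Hp.
  have E1 : \prod_(i < n - g_of cf | (i < 0)%N) apos p1 T v c i.+1 = 1 by rewrite big_pred0.
  rewrite E1 in H0.
  rewrite -mulr_suml -[RHS]mul1r; congr (_ * _); rewrite -{}H0.
  apply: eq_bigr => w _.
  have -> : [forall j : 'I_(n - g_of cf), (j < 0)%N ==> w j] by apply/forallP => j.
  by rewrite mulr1.
under eq_bigr => w _ do rewrite sp_sum natr_sum mulr_sumr.
rewrite exchange_big /=; apply: eq_bigr => k _.
by rewrite G_prod.
Qed.

Definition vhyp (T m : nat) (v : nat -> nat) : Prop :=
  [/\ v 0%N = 1%N, v T.+1 = m.+1,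
   (forall l, (1 <= l)%N -> (l < T)%N -> (v l < v l.+1)%N) &
   (forall l, (1 <= l)%N -> (l <= T)%N -> (1 <= v l)%N && (v l <= m)%N)].


Lemma vinc T m v : vhyp T m v -> forall l, (1 <= l)%N -> (l <= T)%N -> (v l < v l.+1)%N.
Proof.
case=> H0 HT Hi Hb l H1 H2.
case: (ltnP l T) => H3; first exact: Hi.
have -> : l = T by lia.
rewrite HT; move: (Hb T); case/(_ _ _)/andP; lia.
Qed.

Lemma vmono T m v : vhyp T m v -> forall i j, (1 <= i)%N -> (i < j)%N -> (j <= T.+1)%N -> (v i < v j)%N.
Proof.
move=> H i; elim=> [|j IH] H1 H2 H3; first by [].
have := vinc H (l := j); case: (ltnP i j) => H4.
  have := IH H1 H4 (ltnW H3); move=> A B; have := B (leq_trans H1 (ltnW H4)) ltac:(lia); lia.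
have -> : i = j by lia.
move=> B; apply: B; lia.
Qed.

Lemma vge T m v : vhyp T m v -> forall l, (l <= T.+1)%N -> (l <= v l)%N.
Proof.
move=> H; elim=> [|l IH] Hl; first by [].
case: l IH Hl => [|l] IH Hl.
  case: H => H0 HT _ Hb; case: (posnP T) => HT0.
    by move: HT; rewrite HT0 => ->.
  by case/andP: (Hb 1%N erefl HT0).
have A1 : (l.+1 <= T)%N by lia.
have A2 := vinc H (l := l.+1) (ltn0Sn l) A1.
have A3 : (l.+1 <= T.+1)%N by lia.
have := IH A3; lia.
Qed.

Lemma vle T m v : vhyp T m v -> forall l, (l <= T.+1)%N -> (v l <= m.+1)%N.
Proof.
move=> H l Hl; case: (H) => H0 HT _ Hb.
case: l Hl => [|l] Hl; first by rewrite H0.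
case: (ltnP l T) => H1; last first.
  have E : l = T by lia.
  by rewrite E HT.
by case/andP: (Hb l.+1 erefl H1) => _ ?; lia.
Qed.

Lemma vuniq T m v : vhyp T m v -> forall l1 l2, (1 <= l1)%N -> (1 <= l2)%N ->
  (l1 <= T.+1)%N -> (l2 <= T.+1)%N -> v l1 = v l2 -> l1 = l2.
Proof.
move=> H l1 l2 H1 H2 H3 H4 E.
case: (ltngtP l1 l2) => // H5.
  by have := vmono H H1 H5 H4; rewrite E ltnn.
by have := vmono H H2 H5 H3; rewrite E ltnn.
Qed.

Lemma vuniq_ord T m v : vhyp T m v -> forall l1 l2 : 'I_T.+1, (1 <= l1)%N -> (1 <= l2)%N -> v l1 = v l2 -> l1 = l2.
Proof.
move=> H l1 l2 H1 H2 E; apply: val_inj => /=.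
apply: (vuniq H) => //; apply: ltnW; exact: ltn_ord.
Qed.

Lemma apos_v (R : ringType) (x : R) T m v c : vhyp T m v -> forall l, (1 <= l)%N -> (l <= T)%N ->
  apos x T v c (v l) = (c l)%:R.
Proof.
move=> H l H1 H2; rewrite /apos; case: pickP => [l' /andP [H3 /eqP H4]|].
  have /= -> // : (l' : nat) = l.
  apply: (vuniq H) => //; [exact: ltnW (ltn_ord l') | lia].
move=> /(_ (Ordinal (n := T.+1) (m := l) ltac:(lia))) /=.
by rewrite H1 eqxx.
Qed.

Lemma apos_not (R : ringType) (x : R) T v c p :
  (forall l, (1 <= l)%N -> (l <= T)%N -> v l != p) -> apos x T v c p = x.
Proof.
move=> H; rewrite /apos; case: pickP => [l /andP [H1 H2]|//].
by move: (H l H1 (ltnSE (ltn_ord l))); rewrite H2.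
Qed.

Definition Q (R : ringType) (x : R) T v (c : nat -> bool) (j : nat) : R := \prod_(0 <= i < j) apos x T v c i.+1.

Lemma QS (R : ringType) (x : R) T v (c : nat -> bool) j : Q x T v c j.+1 = Q x T v c j * apos x T v c j.+1.
Proof. by rewrite /Q big_nat_recr. Qed.

Lemma Q0 (R : ringType) (x : R) T v (c : nat -> bool) : Q x T v c 0 = 1.
Proof. by rewrite /Q big_geq. Qed.

Lemma vlem T m v : vhyp T m v -> forall i j, (1 <= i)%N -> (i <= j)%N -> (j <= T.+1)%N -> (v i <= v j)%N.
Proof.
move=> H i j H1 H2 H3; case: (ltngtP i j) H2 => // H4 _.
  exact: ltnW (vmono H H1 H4 H3).
by rewrite H4.
Qed.

Lemma QA (R : comRingType) (x : R) T m v (c : nat -> bool) : vhyp T m v -> forall l, (l <= T)%N ->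
  (forall l', (1 <= l')%N -> (l' <= l)%N -> c l') ->
  forall j, (l == 0)%N || (v l <= j)%N -> (j < v l.+1)%N -> Q x T v c j * x ^+ l = x ^+ j.
Proof.
move=> H; elim=> [|l IH] HlT Hc j.
  move=> _; elim: j => [|j IHj] Hj; first by rewrite Q0 mulr1.
  rewrite QS apos_not; last first.
    move=> l' H1 H2; apply/eqP => E.
    have := vlem H (isT : (1 <= 1)%N) H1 (leq_trans H2 (leqnSn T)); lia.
  rewrite expr0 mulr1 in IHj; rewrite expr0 mulr1 exprSr IHj //; lia.
move=> /= Hj1 Hj2.
have [d Ed] : exists d, j = (v l.+1 + d)%N by exists (j - v l.+1)%N; lia.
subst j; clear Hj1.
have vp : (1 <= v l.+1)%N by have := vge H (l := l.+1) ltac:(lia); lia.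
elim: d Hj2 => [|d IHd] Hd.
  rewrite addn0; have E : v l.+1 = (v l.+1).-1.+1 by lia.
  rewrite {1}E QS -E (apos_v _ _ H) // ?Hc // mulr1 exprSr mulrA IH //.
  all: try lia.
  - by rewrite -exprSr -E.
  - by move=> l' H1 H2; apply: Hc => //; lia.
  - case: l IH HlT Hc {Hd E vp} => [//|l] IH HlT Hc /=.
    have := vmono H (i := l.+1) (j := l.+2) isT (ltnSn _) ltac:(lia); lia.
rewrite addnS QS apos_not; last first.
  move=> l' H1 H2; apply/eqP => E.
  case: (leqP l' l.+1) => H3.
    have := vlem H H1 H3 ltac:(lia); lia.
  have := vlem H (i := l.+2) (j := l') isT H3 ltac:(lia); lia.
rewrite [RHS]exprSr mulrAC IHd //; lia.
Qed.

Lemma Qzero (R : ringType) (x : R) T m v (c : nat -> bool) L : vhyp T m v -> (1 <= L)%N -> (L <= T)%N -> c L = false ->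
  forall d, Q x T v c (v L + d) = 0.
Proof.
move=> H H1 H2 HcL; elim=> [|d IH].
  have vp : (1 <= v L)%N by have := vge H (l := L) ltac:(lia); lia.
  rewrite addn0; have E : v L = (v L).-1.+1 by lia.
  by rewrite {1}E QS -E (apos_v _ _ H) // HcL mulr0.
by rewrite addnS QS IH mul0r.
Qed.

Lemma geom (R : comRingType) (x : R) s t : (s <= t)%N ->
  (1 - x) * \sum_(s <= k < t) x ^+ k.+1 = x ^+ s.+1 - x ^+ t.+1.
Proof.
elim: t => [|t IH] Hst.
  have -> : s = 0%N by lia.
  by rewrite big_geq // mulr0 subrr.
case: (ltngtP s t.+1) Hst => // H _.
  rewrite big_nat_recr //= mulrDr IH //.
  rewrite [x ^+ t.+2]exprS; ring.
by rewrite H big_geq // mulr0 subrr.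
Qed.

Lemma expz_sub (R : fieldType) (x : R) (a k : nat) : x != 0 ->
  x ^ (a%:Z - k%:Z) = x ^+ a / x ^+ k.
Proof. by move=> Hx; rewrite expfzDr // -exprnN. Qed.

Lemma alg (R : realFieldType) (x : R) (v : nat -> nat) l S :
  x != 0 -> 1 - x != 0 -> (1 <= v l)%N -> (1 <= v l.+1)%N ->
  (1 - x) * S = x ^+ (v l) - x ^+ (v l.+1) ->
  term x (1 - x) v l = S / x ^+ l + (v l - 1)%:R * x ^+ (v l) / x ^+ l
     - (v l.+1 - 1)%:R * x ^+ (v l.+1) / x ^+ l.+1.
Proof.
move=> Hx Hy Ha Hb HS.
have ES : S = (x ^+ v l - x ^+ v l.+1) / (1 - x).
  by rewrite -HS [(1 - x) * S]mulrC mulfK.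
have E1 : x ^ (1 - l%:Z) = x / x ^+ l.
  by have := expz_sub 1 l Hx; rewrite expr1.
have E2 : x ^ ((v l)%:Z - 1) = x ^+ v l / x.
  by have := expz_sub (v l) 1 Hx; rewrite expr1.
have E3 : x ^ ((v l.+1)%:Z - 2) = x ^+ v l.+1 / (x * x).
  by have := expz_sub (v l.+1) 2 Hx; rewrite expr2.
have Hxl : x ^+ l != 0 by rewrite expf_neq0.
rewrite /term E1 E2 E3 ES natrB // natrB // exprSr.
field.
by rewrite Hx Hy Hxl.
Qed.

Definition Fs (R : ringType) (x : R) T v (c : nat -> bool) l : R :=
  \sum_(0 <= k < (v l - 1)%N) Q x T v c k.+1.
Definition Dl (R : fieldType) (x : R) (v : nat -> nat) l : R :=
  (v l - 1)%:R * x ^+ (v l) / x ^+ l.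

Lemma Flemma (R : realFieldType) (x : R) T m v (c : nat -> bool) :
  x != 0 -> 1 - x != 0 -> vhyp T m v -> forall l, (l <= T.+1)%N ->
  (forall l', (1 <= l')%N -> (l' < l)%N -> c l') ->
  Fs x T v c l = \sum_(0 <= l' < l) term x (1 - x) v l' + Dl x v l.
Proof.
move=> Hx Hy H; elim=> [|l IH] Hl Hc.
  case: (H) => H0 _ _ _.
  by rewrite /Fs /Dl H0 !big_geq // mul0r mul0r addr0.
have vpl : (1 <= v l)%N.
  case: l {IH Hc} Hl => [|l] Hl; first by case: H => ->.
  by have := vge H (l := l.+1) ltac:(lia); lia.
have vpl1 : (1 <= v l.+1)%N by have := vge H (l := l.+1) ltac:(lia); lia.
have vll : (v l <= v l.+1)%N.
  case: l {IH Hc vpl} vpl1 Hl => [|l] vpl1 Hl; first by case: (H) => -> _ _ _.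
  by apply: ltnW; apply: (vmono H) => //; lia.
rewrite /Fs (big_cat_nat _ (n := (v l - 1)%N)) //=; last by lia.
rewrite -/(Fs x T v c l) IH; last 2 first.
- lia.
- by move=> l' H1 H2; apply: Hc => //; lia.
rewrite big_nat_recr //=.
set S := \sum_(v l - 1 <= k < v l.+1 - 1) x ^+ k.+1.
have HS : (1 - x) * S = x ^+ v l - x ^+ v l.+1.
  rewrite /S geom; last by lia.
  by rewrite !subn1 !prednK.
have Hseg : \sum_(v l - 1 <= k < v l.+1 - 1) Q x T v c k.+1 = S / x ^+ l.
  rewrite /S mulr_suml; apply: eq_big_nat => k Hk.
  have Hxl : x ^+ l != 0 by rewrite expf_neq0.
  have Hc' : forall l', (1 <= l')%N -> (l' <= l)%N -> c l'.
    by move=> l' H1 H2; apply: Hc => //; lia.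
  have Hk1 : (l == 0)%N || (v l <= k.+1)%N by apply/orP; right; lia.
  have Hk2 : (k.+1 < v l.+1)%N by lia.
  have HlT : (l <= T)%N by lia.
  by rewrite -(@QA _ x T m v c H l HlT Hc' k.+1 Hk1 Hk2) mulfK.
rewrite Hseg (alg (S := S)) // /Dl.
ring.
Qed.

Theorem theorem2 (R : realFieldType) (p1 p2 : R) (cf : conf) (n T : nat)
  (v : nat -> nat) (c : nat -> bool) :
  0 < p1 -> p1 < 1 -> p2 = 1 - p1 ->
  (g_of cf <= n)%N ->
  (T <= n - g_of cf)%N ->
  v 0%N = 1%N -> v T.+1 = (n - g_of cf).+1 ->
  (forall l, (1 <= l)%N -> (l < T)%N -> (v l < v l.+1)%N) ->
  (forall l, (1 <= l)%N -> (l <= T)%N -> (1 <= v l)%N && (v l <= n - g_of cf)%N) ->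
  ( (* condition C3 *)
    (forall l, (1 <= l)%N -> (l <= T)%N -> c l) ->
    EK p1 p2 cf n T v c =
      (g_of cf)%:R + \sum_(0 <= l < T.+1) term p1 p2 v l
      + (n - g_of cf)%:R * p1 ^+ (n - g_of cf - T))
  /\
  ( (* condition C4 *)
    forall L, (1 <= L)%N -> (L <= T)%N ->
    (forall l, (1 <= l)%N -> (l < L)%N -> c l) -> c L = false ->
    EK p1 p2 cf n T v c =
      (g_of cf)%:R + \sum_(0 <= l < L) term p1 p2 v l
      + (v L - 1)%:R * p1 ^+ (v L - L)).
Proof.
move=> Hp0 Hp1 -> Hg HTm Hv0 HvT Hinc Hb.
have H : vhyp T (n - g_of cf) v by split.
have Hx : p1 != 0 by apply/eqP => E; lra.
have Hy : 1 - p1 != 0 by apply/eqP => E; lra.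
have Hp : p1 + (1 - p1) = 1 by rewrite addrC subrK.
have HE : EK p1 (1 - p1) cf n T v c = (g_of cf)%:R +
    \sum_(0 <= k < n - g_of cf) Q p1 T v c k.+1.
  rewrite EK_eq //; last exact: vuniq_ord H.
  congr (_ + _); rewrite big_mkord; apply: eq_bigr => k _.
  rewrite /Q (@big_nat_widen _ _ _ 0 k.+1 (n - g_of cf)) //= big_mkord.
  by apply: eq_bigl => i.
move: HE HTm HvT Hb H; set m := (n - g_of cf)%N => HE HTm HvT Hb H.
split.
  move=> Hc; rewrite HE.
  have -> : \sum_(0 <= k < m) Q p1 T v c k.+1 = Fs p1 T v c T.+1.
    by rewrite /Fs HvT subn1.
  rewrite (Flemma Hx Hy H (l := T.+1) (leqnn _) (fun l' H1 H2 => Hc l' H1 H2)).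
  rewrite /Dl HvT subn1 /= addrA.
  have Em : m.+1 = ((m - T) + T.+1)%N by lia.
  by rewrite [in p1 ^+ m.+1]Em exprD mulrA mulfK ?expf_neq0.
move=> L H1 H2 Hc HcL; rewrite HE.
have vL1 : (1 <= v L)%N by have := vge H (l := L) ltac:(lia); lia.
have vLm : (v L <= m)%N by move: (Hb L H1 H2) => /andP [].
rewrite (big_cat_nat _ (n := (v L - 1)%N)) //=; last by lia.
rewrite [X in _ + (_ + X)]big_nat_cond [X in _ + (_ + X)]big1 ?addr0; last first.
  move=> k /andP [/andP [Hk1 Hk2] _].
  have -> : k.+1 = (v L + (k.+1 - v L))%N by lia.
  exact: (@Qzero _ p1 T m v c L H H1 H2 HcL).
have HLT : (L <= T.+1)%N by lia.
rewrite -/(Fs p1 T v c L) (Flemma Hx Hy H HLT Hc).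
rewrite /Dl addrA.
have Em : v L = ((v L - L) + L)%N by have := vge H (l := L) ltac:(lia); lia.
by rewrite [in p1 ^+ v L]Em exprD mulrA mulfK ?expf_neq0.
Qed.
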